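(* Let $\varepsilon>0$, let $QR\in\mathcal{QR}_\varepsilon$ be a quasi-rectangle with pseudo-axial symmetry, let $E\in\mathcal C_\varepsilon$ and let $\mathcal R(E)\in\mathcal C_\varepsilon$ be the discrete Steiner-like rearrangement of $E$ with respect to $QR$. Then $$D_\varepsilon(E,QR)\ \ge\ D_\varepsilon(\mathcal R(E),QR).$$
   Context: For $\mathcal J\subset\varepsilon\mathbb Z^2$, $E_{\mathcal J}=\bigcup_{j\in\mathcal J}(j+\varepsilon[-\frac12,\frac12]^2)$ and $\mathcal C_\varepsilon=\{E_{\mathcal J}:\mathcal J\subset\varepsilon\mathbb Z^2\}$. Write $\mathcal J(\cdot,q)=\{\varepsilon(j_1,q)\in\mathcal J\}$, $\mathcal J(p,\cdot)=\{\varepsilon(p,j_2)\in\mathcal J\}$. Discrete distance: for $i\in\varepsilon\mathbb Z^2$, $d^\varepsilon_\infty(i,\partial\mathcal J)=\mathrm{dist}(i,\mathcal J)+\mathrm{dist}(i,\varepsilon\mathbb Z^2\setminus\mathcal J)$ with $\mathrm{dist}(i,\mathcal J)=\inf\{\|i-j\|_\infty:j\in\mathcal J\}$, extended to $x\in i+\varepsilon[-\frac12,\frac12]^2$ by $d^\varepsilon_\infty(x,\partial\mathcal J)=d^\varepsilon_\infty(i,\partial\mathcal J)$. For $E=E_{\mathcal J}$ and $F\in\mathcal C_\varepsilon$, $D_\varepsilon(F,E)=\int_{F\triangle E}d^\varepsilon_\infty(x,\partial\mathcal J)\,dx$. Quasi-rectangle: $E=E_{\mathcal J}\in\mathcal C_\varepsilon$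 with $\#\mathcal J=nm+r$, $n,m,r\in\mathbb N$, $r<n=\max\{n,m\}$, $E=R\cup Q$ with $R$ a rectangle of sides $\varepsilon n$ (horizontal) and $\varepsilon m$ (vertical), $Q$ a rectangle of sides $\varepsilon r$ (horizontal) and $\varepsilon$ (vertical), each lattice point of $Q$ at distance $\varepsilon$ from a lattice point of $R$; $\mathcal{QR}_\varepsilon$ is the set of these. Pseudo-axial symmetry: the center of $R$ is $(0,0)$, $(\frac\varepsilon2,0)$, $(0,\frac\varepsilon2)$, $(\frac\varepsilon2,\frac\varepsilon2)$ according to ($n,m$ odd), ($n$ even, $m$ odd), ($n$ odd, $m$ even), ($n,m$ even), and $Q=[-\varepsilon\frac r2,\varepsilon\frac r2]\times[L,L+\varepsilon]$ if $r$ odd, $Q=[-\varepsilon\frac r2+\frac\varepsilon2,\varepsilon\frac r2+\frac\varepsilon2]\times[L,L+\varepsilon]$ if $r$ even, with $L=\mathcal H^1(\Pi_2(R)\cap(\{0\}\times[0,\infty)))$. Rearrangement $\mathcal R(E)$ for $E=E_{\mathcal J}$: Step 1: for each $q$, with $N_q=\#\mathcal J(\cdot,q)$, replace row $q$ by $\mathcal J'(q)=\{\varepsilon(j,q):j\in\{-\frac{N_q-1}2,\dots,\frac{N_q-1}2\}\}$ if $N_q$ odd, $\{\varepsilon(j,q):j\in\{-\frac{N_q}2+1,\dots,\frac{N_q}2\}\}$ if $N_q$ even; $\mathcal J'=\bigcup_q\mathcal J'(q)$. Step 2: for each $p$, with $M_p=\#\mathcal J'(p,\cdot)$: if $m$ even,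 $\mathcal J''(p)=\{\varepsilon(p,j):j\in\{1-\frac{M_p-1}2,\dots,1+\frac{M_p-1}2\}\}$ if $M_p$ odd, $\{\varepsilon(p,j):j\in\{-\frac{M_p}2+1,\dots,\frac{M_p}2\}\}$ if $M_p$ even; if $m$ odd, $\mathcal J''(p)=\{\varepsilon(p,j):j\in\{-\frac{M_p-1}2,\dots,\frac{M_p-1}2\}\}$ if $M_p$ odd, $\{\varepsilon(p,j):j\in\{-\frac{M_p}2+1,\dots,\frac{M_p}2\}\}$ if $M_p$ even. $\mathcal R(E)=E_{\bigcup_p\mathcal J''(p)}$. *)

(* Defs.v *)
From HB Require Import structures.
From mathcomp Require Import all_boot all_order all_algebra.
From mathcomp Require Import finmap.
From mathcomp Require Import all_classical all_reals all_analysis.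

Set Implicit Arguments.
Unset Strict Implicit.
Unset Printing Implicit Defensive.

Import Order.TTheory GRing.Theory Num.Theory.
Import numFieldNormedType.Exports.

Local Open Scope classical_set_scope.
Local Open Scope ring_scope.

(* Lattice conventions.  An index k = (p, q) : int * int stands for the *)
(* lattice point eps * (p, q) of eps Z^2.  A finite index set           *)
(* J : {fset (int * int)} stands for the finite set \mathcal J.         *)

Section Lattice.
Variable R : realType.

Definition lpt (eps : R) (k : int * int) : R * R :=
  (eps * k.1%:~R, eps * k.2%:~R).

Definition normInf (x y : R * R) : R :=
  Num.max `|x.1 - y.1| `|x.2 - y.2|.

Definition cell (eps : R) (k : int * int) : set (R * R) :=
  [set x | `|x.1 - (lpt eps k).1| <= eps / 2 /\ `|x.2 - (lpt eps k).2| <= eps / 2].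

Definition EJ (eps : R) (J : {fset (int * int)}) : set (R * R) :=
  [set x | exists2 k, k \in J & cell eps k x].

Definition distJ (eps : R) (i : int * int) (J : {fset (int * int)}) : R :=
  inf [set normInf (lpt eps i) (lpt eps j) | j in [set j | j \in J]].

Definition distCJ (eps : R) (i : int * int) (J : {fset (int * int)}) : R :=
  inf [set normInf (lpt eps i) (lpt eps j) | j in [set j | j \notin J]].

Definition dlat (eps : R) (J : {fset (int * int)}) (i : int * int) : R :=
  distJ eps i J + distCJ eps i J.

(* index of a cell containing x (the nearest lattice point; on the
   measure-zero cell boundaries the choice is made by rounding up) *)
Definition cellidx (eps : R) (x : R * R) : int * int :=
  (Num.floor (x.1 / eps + 2^-1), Num.floor (x.2 / eps + 2^-1)).

Definition dext (eps : R) (J : {fset (int * int)}) (x : R * R) : R :=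
  dlat eps J (cellidx eps x).

Definition leb2 := ((@lebesgue_measure R) \x (@lebesgue_measure R))%E.

Definition Deps (eps : R) (K J : {fset (int * int)}) : \bar R :=
  (\int[leb2]_(x in (EJ eps K `\` EJ eps J) `|` (EJ eps J `\` EJ eps K))
      (dext eps J x)%:E)%E.

End Lattice.

Definition zrange (a b : int) : seq int :=
  if a <= b then mkseq (fun i : nat => a + i%:Z) (absz (b - a)).+1 else [::].

Definition centered (N : nat) : seq int :=
  if odd N then zrange (- ((N.-1)./2)%:Z) ((N.-1)./2)%:Z
  else zrange (- (N./2)%:Z + 1) (N./2)%:Z.

Definition centered2 (m M : nat) : seq int :=
  if odd m then centered M
  else if odd M then zrange (1 - ((M.-1)./2)%:Z) (1 + ((M.-1)./2)%:Z)
  else zrange (- (M./2)%:Z + 1) (M./2)%:Z.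

Definition rowcount (J : {fset (int * int)}) (q : int) : nat :=
  (#|` [fset j in J | j.2 == q]|)%fset.
Definition colcount (J : {fset (int * int)}) (p : int) : nat :=
  (#|` [fset j in J | j.1 == p]|)%fset.

Definition step1 (J : {fset (int * int)}) : {fset (int * int)} :=
  ([fset x in flatten [seq [seq (k, j.2) | k <- centered (rowcount J j.2)]
                      | j <- J] ])%fset.

Definition step2 (m : nat) (J : {fset (int * int)}) : {fset (int * int)} :=
  ([fset x in flatten [seq [seq (j.1, k) | k <- centered2 m (colcount J j.1)]
                      | j <- J] ])%fset.

(* index set of the rearrangement R(E_J) with respect to a quasi-rectangle
   whose rectangle has vertical side eps * m *)
Definition rearr (m : nat) (J : {fset (int * int)}) : {fset (int * int)} :=
  step2 m (step1 J).

(* Quasi-rectangle with pseudo-axial symmetry, #J = n m + r, r < n,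
   R of sides eps n (horizontal) x eps m (vertical) centered as prescribed,
   Q the row of r cells centered as prescribed, lying on top of R. *)
Definition qrR (n m : nat) : {fset (int * int)} :=
  ([fset x in [seq (p, q) | p <- centered n, q <- centered m]])%fset.

(* row index of the row of cells just above R: the cells of Q have
   vertical extent [L, L + eps] with L the top edge of R *)
Definition toprow (m : nat) : int := (m./2)%:Z + 1.

Definition qrQ (m r : nat) : {fset (int * int)} :=
  ([fset x in [seq (p, toprow m) | p <- centered r]])%fset.

Definition qr (n m r : nat) : {fset (int * int)} := (qrR n m `|` qrQ m r)%fset.

(* Main.v *)
Require Import Defs.
From HB Require Import structures.
From mathcomp Require Import all_boot all_order all_algebra.
From mathcomp Require Import finmap.
From mathcomp Require Import all_classical all_reals all_analysis.
From mathcomp Require Import lra ring zify.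

Set Implicit Arguments.
Unset Strict Implicit.
Unset Printing Implicit Defensive.
Import Order.TTheory GRing.Theory Num.Theory.
Import numFieldNormedType.Exports.
Local Open Scope classical_set_scope.
Local Open Scope ring_scope.
Section Ana.
Variable R : realType.
Variable eps : R.
Hypothesis eps0 : 0 < eps.
Local Notation MR := (measurableTypeR R).

Definition lo (z : int) : R := eps * (z%:~R - 2^-1).
Definition hi (z : int) : R := eps * (z%:~R + 2^-1).

Lemma lo_hi z : lo z < hi z.
Proof. by rewrite /lo /hi ltr_pM2l //; lra. Qed.

Lemma lo_hi_lt a b : lo a < hi b -> (a <= b)%R.
Proof.
rewrite /lo /hi ltr_pM2l // => H.
have : (a%:~R : R) < (b + 1)%:~R by rewrite intrD; lra.
rewrite ltr_int; lia.
Qed.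

Lemma lo_hi_le a b : lo a <= hi b -> (a <= b + 1)%R.
Proof.
rewrite /lo /hi ler_pM2l // => H.
have : (a%:~R : R) <= (b + 1)%:~R by rewrite intrD; lra.
by rewrite ler_int.
Qed.

Definition box (k : int * int) : set (R * R) :=
  [set` Interval (BLeft (lo k.1)) (BLeft (hi k.1))] `*`
  [set` Interval (BLeft (lo k.2)) (BLeft (hi k.2))].
Definition ocell (k : int * int) : set (R * R) :=
  [set` Interval (BRight (lo k.1)) (BLeft (hi k.1))] `*`
  [set` Interval (BRight (lo k.2)) (BLeft (hi k.2))].

Lemma cellP k x : cell eps k x <->
  ((lo k.1 <= x.1 <= hi k.1) /\ (lo k.2 <= x.2 <= hi k.2)).
Proof.
have e1 z : eps * z%:~R - eps / 2 = lo z by rewrite /lo; ring.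
have e2 z : eps * z%:~R + eps / 2 = hi z by rewrite /hi; ring.
by rewrite /cell /lpt /= !ler_distl !e1 !e2.
Qed.

Lemma boxP k x : box k x <->
  ((lo k.1 <= x.1 < hi k.1) /\ (lo k.2 <= x.2 < hi k.2)).
Proof. by rewrite /box /= !in_itv; split. Qed.

Lemma ocellP k x : ocell k x <->
  ((lo k.1 < x.1 < hi k.1) /\ (lo k.2 < x.2 < hi k.2)).
Proof. by rewrite /ocell /= !in_itv; split. Qed.

Lemma floor_iff (z : int) (t : R) :
  (lo z <= t < hi z) <-> Num.floor (t / eps + 2^-1) = z.
Proof.
have tE : t = eps * (t / eps) by rewrite mulrC divfK // gt_eqF.
set u := t / eps in tE *.
rewrite tE /lo /hi ler_pM2l // ltr_pM2l //.
split => [/andP[H1 H2]|<-].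
  apply: floor_def; rewrite intrD; apply/andP; split; lra.
have /andP[] := floor_itv (u + 2^-1); rewrite intrD => H1 H2.
apply/andP; split; lra.
Qed.

Lemma cellidxP k x : cellidx eps x = k <-> box k x.
Proof.
rewrite boxP /cellidx; case: k => a b /=; split.
  by case=> <- <-; split; apply/floor_iff.
by case=> /floor_iff -> /floor_iff ->.
Qed.

Lemma box_cellidx x : box (cellidx eps x) x.
Proof. exact/cellidxP. Qed.

Lemma ocell_box k : ocell k `<=` box k.
Proof.
move=> x /ocellP[/andP[a1 a2] /andP[b1 b2]]; apply/boxP.
by rewrite (ltW a1) (ltW b1) a2 b2.
Qed.

Lemma box_cell k : box k `<=` cell eps k.
Proof.
move=> x /boxP[/andP[a1 a2] /andP[b1 b2]]; apply/cellP.
by rewrite a1 b1 (ltW a2) (ltW b2).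
Qed.

Lemma ocell_cell k j x : ocell k x -> cell eps j x -> j = k.
Proof.
case: k j => [k1 k2] [j1 j2].
move=> /ocellP[/andP[a1 a2] /andP[b1 b2]] /cellP[/andP[c1 c2] /andP[d1 d2]].
have h1 := lo_hi_lt (le_lt_trans c1 a2).
have h2 := lo_hi_lt (lt_le_trans a1 c2).
have h3 := lo_hi_lt (le_lt_trans d1 b2).
have h4 := lo_hi_lt (lt_le_trans b1 d2).
move: h1 h2 h3 h4 => /= *.
congr pair; lia.
Qed.

Definition shifts (j : int * int) : seq (int * int) :=
  [:: j; (j.1 + 1, j.2); (j.1, j.2 + 1); (j.1 + 1, j.2 + 1)].

Lemma cell_idx j x : cell eps j x -> cellidx eps x \in shifts j.
Proof.
case: j => j1 j2.
case E: (cellidx eps x) => [u v].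
have := box_cellidx x; rewrite E => /boxP[/andP[a1 a2] /andP[b1 b2]].
move=> /cellP[/andP[c1 c2] /andP[d1 d2]].
have h1 := lo_hi_lt (le_lt_trans c1 a2).
have h2 := lo_hi_le (le_trans a1 c2).
have h3 := lo_hi_lt (le_lt_trans d1 b2).
have h4 := lo_hi_le (le_trans b1 d2).
move: h1 h2 h3 h4 => /= h1 h2 h3 h4.
rewrite /shifts !inE /= !xpair_eqE.
have [->|->] : u = j1 \/ u = j1 + 1 by lia.
  have [->|->] : v = j2 \/ v = j2 + 1 by lia.
    by rewrite !eqxx.
  by rewrite !eqxx !orbT.
have [->|->] : v = j2 \/ v = j2 + 1 by lia.
  by rewrite !eqxx !orbT.
by rewrite !eqxx !orbT.
Qed.


Lemma measurable_box k : measurable (box k : set (MR * MR)).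
Proof. by apply: measurableX; exact: measurable_itv. Qed.

Lemma measurable_ocell k : measurable (ocell k : set (MR * MR)).
Proof. by apply: measurableX; exact: measurable_itv. Qed.

Lemma measurable_cell k : measurable (cell eps k : set (MR * MR)).
Proof.
have -> : cell eps k = [set` Interval (BLeft (lo k.1)) (BRight (hi k.1))] `*`
  [set` Interval (BLeft (lo k.2)) (BRight (hi k.2))].
  apply/seteqP; split => x; rewrite /= !in_itv /=; first by move/cellP.
  by move=> ?; apply/cellP.
by apply: measurableX; exact: measurable_itv.
Qed.

Lemma measurable_EJ (K : {fset (int * int)}) : measurable (EJ eps K : set (MR * MR)).
Proof.
suff H : forall s : seq (int * int),
    measurable ([set x | exists2 k, k \in s & cell eps k x] : set (MR * MR)) by exact: H.
elim => [|a s IH].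
  have -> : [set x | exists2 k, k \in [::] & cell eps k x] = set0.
    by apply/seteqP; split => x //= [].
  exact: measurable0.
have -> : [set x | exists2 k, k \in a :: s & cell eps k x] =
   cell eps a `|` [set x | exists2 k, k \in s & cell eps k x].
  apply/seteqP; split => x /=.
    by case=> k; rewrite inE => /orP[/eqP ->|ks]; [left|right; exists k].
  case=> [ca|[k ks ck]]; first by exists a; rewrite ?inE ?eqxx.
  by exists k; rewrite // inE ks orbT.
by apply: measurableU => //; exact: measurable_cell.
Qed.

Definition symd (K S : {fset (int * int)}) : set (R * R) :=
  (EJ eps K `\` EJ eps S) `|` (EJ eps S `\` EJ eps K).

Lemma measurable_symd K S : measurable (symd K S : set (MR * MR)).
Proof. by apply: measurableU; apply: measurableD; exact: measurable_EJ. Qed.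

Lemma EJ_ocell (K : {fset (int * int)}) k x : ocell k x -> (EJ eps K x <-> k \in K).
Proof.
move=> ox; split; first by case=> j jK cj; rewrite -(ocell_cell ox cj).
by move=> kK; exists k => //; apply: box_cell; exact: ocell_box.
Qed.

Lemma leb2X (a b c d : R) (ia ib : bool) (ic id : bool) :
  @leb2 R ([set` Interval (BSide ia a) (BSide ib b)] `*` [set` Interval (BSide ic c) (BSide id d)]) =
  (lebesgue_measure [set` Interval (BSide ia a) (BSide ib b)] *
  lebesgue_measure [set` Interval (BSide ic c) (BSide id d)])%E.
Proof. by rewrite /leb2 product_measure1E //; exact: measurable_itv. Qed.

Lemma hilo z : hi z - lo z = eps.
Proof. by rewrite /hi /lo; field. Qed.

Lemma leb2_box k : @leb2 R (box k) = (eps * eps)%:E.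
Proof.
rewrite /box leb2X !lebesgue_measure_itv /= !lte_fin !lo_hi /=.
by rewrite -!EFinB !hilo.
Qed.

Lemma leb2_ocell k : @leb2 R (ocell k) = (eps * eps)%:E.
Proof.
rewrite /ocell leb2X !lebesgue_measure_itv /= !lte_fin !lo_hi /=.
by rewrite -!EFinB !hilo.
Qed.

Lemma symd_bool (b1 b2 : bool) : ((b1 /\ ~ b2) \/ (b2 /\ ~ b1)) <-> (b1 != b2).
Proof.
case: b1; case: b2 => /=; split => //; try by [left|right].
- by case=> -[].
- by case=> -[].
Qed.

Lemma leb2_Dbox K S k : @leb2 R (symd K S `&` box k) =
  if (k \in K) != (k \in S) then (eps * eps)%:E else 0%E.
Proof.
have mDb : measurable (symd K S `&` box k : set (MR * MR)).
  by apply: measurableI; [exact: measurable_symd|exact: measurable_box].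
case: ifP => H.
  apply/le_anti/andP; split.
    rewrite -(leb2_box k); apply: le_measure; rewrite ?inE //;
      try exact: measurable_box; exact: subIsetr.
  rewrite -(leb2_ocell k); apply: le_measure; rewrite ?inE //;
    try exact: measurable_ocell.
  move=> x ox; split; last exact: ocell_box.
  have eK : EJ eps K x = (k \in K) by apply/propext; exact: EJ_ocell.
  have eS : EJ eps S x = (k \in S) by apply/propext; exact: EJ_ocell.
  by rewrite /symd /setU /setD /= eK eS; apply/symd_bool.
apply/le_anti/andP; split; last exact: measure_ge0.
have mbo : measurable (box k `\` ocell k : set (MR * MR)).
  by apply: measurableD; [exact: measurable_box|exact: measurable_ocell].
apply: (@le_trans _ _ (@leb2 R (box k `\` ocell k))).
  apply: le_measure; rewrite ?inE //.
  move=> x [Dx bx]; split => // ox.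
  have eK : EJ eps K x = (k \in K) by apply/propext; exact: EJ_ocell.
  have eS : EJ eps S x = (k \in S) by apply/propext; exact: EJ_ocell.
  by move: Dx; rewrite /symd /setU /setD /= eK eS => /symd_bool; rewrite H.
have hD : @leb2 R (box k `\` ocell k) =
    (@leb2 R (box k) - @leb2 R (box k `&` ocell k))%E.
  apply: measureD; [exact: measurable_box|exact: measurable_ocell|].
  suff : (@leb2 R (box k) < +oo)%E by [].
  by rewrite leb2_box ltry.
rewrite hD setIidr; last exact: ocell_box.
by rewrite leb2_box leb2_ocell subee.
Qed.


Definition Vset (U : {fset (int * int)}) : {fset (int * int)} :=
  (U `|` [fset ((k.1 + 1)%R, k.2) | k in U] `|` [fset (k.1, (k.2 + 1)%R) | k in U]
     `|` [fset ((k.1 + 1)%R, (k.2 + 1)%R) | k in U])%fset.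

Lemma Vset_shifts U j c : j \in U -> c \in shifts j -> c \in Vset U.
Proof.
move=> jU; rewrite /shifts !inE => /or4P[] /eqP ->.
- by rewrite jU.
- have : (j.1 + 1, j.2) \in [fset ((k.1 + 1)%R, k.2) | k in U]%fset.
    exact: (in_imfset _ (fun k : int * int => (k.1 + 1, k.2))).
  by move=> ->; rewrite !orbT.
- have : (j.1, j.2 + 1) \in [fset (k.1, (k.2 + 1)%R) | k in U]%fset.
    exact: (in_imfset _ (fun k : int * int => (k.1, k.2 + 1))).
  by move=> ->; rewrite !orbT.
- have : (j.1 + 1, j.2 + 1) \in [fset ((k.1 + 1)%R, (k.2 + 1)%R) | k in U]%fset.
    exact: (in_imfset _ (fun k : int * int => (k.1 + 1, k.2 + 1))).
  by move=> ->; rewrite !orbT.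
Qed.

Lemma inf_ge0' (A : set R) : (forall a, A a -> 0 <= a) -> 0 <= inf A.
Proof.
move=> A0; case: (pselect (A !=set0)) => [ne|nA].
  apply: (@lb_le_inf R A 0 ne) => a Aa; exact: A0.
have -> : A = set0 by apply/seteqP; split => // a Aa; apply: nA; exists a.
by rewrite inf0.
Qed.

Lemma normInf_ge0 (x y : R * R) : 0 <= normInf x y.
Proof. by rewrite /normInf le_max normr_ge0. Qed.

Lemma dlat_ge0 S k : 0 <= dlat eps S k.
Proof.
rewrite /dlat addr_ge0 //; apply: inf_ge0' => a [j _ <-]; exact: normInf_ge0.
Qed.

Lemma indic1' (A : set (R * R)) x : A x -> (\1_A x : R) = 1.
Proof. by move=> Ax; rewrite indicE mem_set. Qed.

Lemma indic0' (A : set (R * R)) x : ~ A x -> (\1_A x : R) = 0.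
Proof. by move=> Ax; rewrite indicE memNset. Qed.

Lemma Deps_sum K S : Deps eps K S =
  ((eps * eps) * \sum_(k <- Vset (K `|` S)%fset)
      (if (k \in K) != (k \in S) then dlat eps S k else 0))%:E.
Proof.
have -> : Deps eps K S =
  (\int[@leb2 R]_(x in symd K S) (dext eps S x)%:E)%E by [].
have mDb k : measurable (symd K S `&` box k : set (MR * MR)).
  by apply: measurableI; [exact: measurable_symd|exact: measurable_box].
rewrite integral_mkcond.
rewrite (_ : ((fun x => (dext eps S x)%:E) \_ (symd K S)) =
   fun x => (\sum_(k <- Vset (K `|` S)%fset)
     ((dlat eps S k)%:E * (\1_(symd K S `&` box k) x)%:E))%E); last first.
  apply/funext => x; rewrite patchE.
  case: (boolP (x \in symd K S)) => xD.
    have cV : cellidx eps x \in Vset (K `|` S)%fset.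
      move/set_mem: xD => [[[j jK cj] _]|[[j jS cj] _]].
        by apply: (Vset_shifts (j := j)); [rewrite in_fsetU jK|exact: cell_idx].
      by apply: (Vset_shifts (j := j)); [rewrite in_fsetU jS orbT|exact: cell_idx].
    rewrite (bigD1_seq (cellidx eps x)) ?fset_uniq //=.
    rewrite indic1'; last by split; [exact/set_mem|exact: box_cellidx].
    rewrite -EFinM mulr1.
    rewrite big1 ?adde0 // => k kc.
    rewrite indic0' ?mule0 -?EFinM ?mulr0 //.
    by case=> _ /cellidxP ck; rewrite ck eqxx in kc.
  rewrite big1 // => k _.
  rewrite indic0' ?mule0 -?EFinM ?mulr0 //.
  by case=> Dx _; rewrite mem_set in xD.
rewrite ge0_integral_sum //; last 2 first.
- move=> k; apply: measurable_funeM; apply/measurable_realfun.measurable_EFinP.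
  exact: measurable_realfun.measurable_indic.
- move=> k x _; rewrite mule_ge0 // lee_fin ?dlat_ge0 //.
under eq_bigr => k _.
  rewrite ge0_integralZl //; try (by apply/measurable_realfun.measurable_EFinP;
     exact: measurable_realfun.measurable_indic);
    try (by move=> x _; rewrite lee_fin); try (by rewrite lee_fin dlat_ge0).
  rewrite integral_indic // setIT.
  over.
rewrite mulr_sumr -sumEFin; apply: eq_bigr => k _.
transitivity ((dlat eps S k)%:E * @leb2 R (symd K S `&` box k))%E; first by [].
rewrite leb2_Dbox.
by case: ifP => _; rewrite ?mule0 ?mulr0 // -EFinM mulrC.
Qed.

End Ana.
(* ---------- encoding of Z into N along 0,1,-1,2,-2,... ---------- *)
Definition enc (x : int) : nat :=
  match x with
  | Posz 0 => 0
  | Posz n.+1 => (n.*2).+1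
  | Negz n => (n.+1).*2
  end.

Definition dec (i : nat) : int :=
  if odd i then Posz (i./2).+1 else
  if i./2 is j.+1 then Negz j else 0.

Lemma encK : cancel enc dec.
Proof.
case=> [[|n]|n] //=.
- by rewrite /dec /= odd_double /= uphalf_double.
- by rewrite /dec odd_double /= half_double.
Qed.

Lemma decK : cancel dec enc.
Proof.
move=> i; rewrite /dec; have := odd_double_half i.
case: (odd i) => /= H.
  by rewrite add1n in H.
case E: (i./2) => [|j] //=; rewrite E /= in H; first by rewrite -H.
by rewrite add0n in H.
Qed.

Lemma enc_inj : injective enc. Proof. exact: can_inj encK. Qed.
Lemma dec_inj : injective dec. Proof. exact: can_inj decK. Qed.

Lemma dec_even a : dec (a.*2) = - (a%:Z).
Proof. by rewrite /dec odd_double half_double; case: a. Qed.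

Lemma dec_odd a : dec (a.*2).+1 = (a.+1)%:Z.
Proof. by rewrite /dec /= odd_double /= uphalf_double. Qed.

Lemma mem_zrange (a b x : int) : (x \in zrange a b) = (a <= x <= b).
Proof.
rewrite /zrange; case: ifP => ab.
  apply/idP/idP.
    move=> /mapP[i]; rewrite mem_iota => /andP[_ hi] ->.
    lia.
  move=> H; apply/mapP; exists (absz (x - a)).
    rewrite mem_iota /=; lia.
  lia.
rewrite in_nil; apply/esym/negbTE; apply/negP; lia.
Qed.

Lemma nat_parity (N : nat) : {h | N = h.*2} + {h | N = (h.*2).+1}.
Proof.
have := odd_double_half N; case: (odd N) => /= H.
  by right; exists N./2; rewrite add1n in H; exact/esym.
by left; exists N./2; rewrite add0n in H; exact/esym.
Qed.

Lemma mem_centered N x : (x \in centered N) = (enc x < N)%N.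
Proof.
rewrite /centered; case: (nat_parity N) => -[h ->].
  rewrite odd_double half_double mem_zrange.
  case: x => [[|n]|n] /=; lia.
rewrite /= odd_double /= half_double mem_zrange.
case: x => [[|n]|n] /=; lia.
Qed.

Lemma uniq_zrange a b : uniq (zrange a b).
Proof.
rewrite /zrange; case: ifP => // _; rewrite /mkseq map_inj_uniq ?iota_uniq //.
by move=> i j /addrI [].
Qed.

Lemma uniq_centered N : uniq (centered N).
Proof. by rewrite /centered; case: ifP => _; exact: uniq_zrange. Qed.

Lemma centered_perm N : perm_eq (centered N) (map dec (iota 0 N)).
Proof.
apply: uniq_perm; first exact: uniq_centered.
  by rewrite map_inj_uniq ?iota_uniq //; exact: dec_inj.
move=> x; rewrite mem_centered -{2}(encK x) (mem_map dec_inj) mem_iota.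
by rewrite add0n.
Qed.

Lemma size_centered N : size (centered N) = N.
Proof. by rewrite (perm_size (centered_perm N)) size_map size_iota. Qed.

Lemma flip_inj : injective (fun x : int => 1 - x).
Proof. by move=> a b /= /addrI /oppr_inj. Qed.

Lemma centered2_even m M : ~~ odd m ->
  perm_eq (centered2 m M) (map (fun x => 1 - x) (centered M)).
Proof.
move=> /negbTE mE.
have u2 : uniq (centered2 m M).
  by rewrite /centered2 mE; case: ifP => _; exact: uniq_zrange.
apply: uniq_perm => //.
  by rewrite map_inj_uniq ?uniq_centered //; exact: flip_inj.
move=> x; have -> : x = 1 - (1 - x) by rewrite opprB addrC subrK.
rewrite (mem_map flip_inj).
rewrite !mem_centered /centered2 mE.
case: (nat_parity M) => -[h ->].
  rewrite odd_double half_double mem_zrange.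
  case: (1 - x) => [[|n]|n] /=; lia.
rewrite /= odd_double /= half_double mem_zrange.
case E: (1 - x) => [[|n]|n] /=; lia.
Qed.
Section Sums.
Variable R : realType.

Lemma seq_max (t : seq nat) : t != [::] -> exists2 M, M \in t & forall x, x \in t -> (x <= M)%N.
Proof.
elim: t => // a [|b t] IH _.
  by exists a; rewrite ?inE // => x; rewrite inE => /eqP ->.
have [M Mt HM] := IH isT.
exists (maxn a M).
  by rewrite /maxn; case: ifP => _; [rewrite inE Mt orbT|rewrite inE eqxx].
move=> x; rewrite inE => /orP[/eqP ->|/HM xM]; first exact: leq_maxl.
exact: (leq_trans xM (leq_maxr _ _)).
Qed.

Lemma mono_nat (g : nat -> R) : (forall i, g i <= g i.+1) ->
  forall i j, (i <= j)%N -> g i <= g j.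
Proof.
move=> hg i j /subnKC <-; elim: (j - i)%N => [|k IH]; first by rewrite addn0.
by rewrite addnS (le_trans IH).
Qed.

Lemma sum_iota_le (g : nat -> R) : (forall i, g i <= g i.+1) ->
  forall N (t : seq nat), uniq t -> size t = N ->
  \sum_(i <- iota 0 N) g i <= \sum_(i <- t) g i.
Proof.
move=> hg; elim=> [|N IH] t ut st.
  by move/size0nil: st => ->; rewrite !big_nil.
have tn : t != [::] by case: t st ut.
have [M Mt HM] := seq_max tn.
have NM : (N <= M)%N.
  have : (size t <= size (iota 0 M.+1))%N.
    apply: uniq_leq_size => // x /HM xM; rewrite mem_iota /=; lia.
  by rewrite st size_iota.
rewrite (perm_big _ (perm_to_rem Mt)) big_cons.
rewrite -addn1 iotaD big_cat /= big_cons big_nil addr0 addrC.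
apply: lerD; first exact: mono_nat.
apply: IH; first exact: rem_uniq.
by rewrite size_rem // st.
Qed.

Lemma best_centered (f : int -> R) :
  (forall a : nat, f (- (a%:Z)) <= f (a.+1)%:Z) ->
  (forall a : nat, f (a.+1)%:Z <= f (- (a.+1)%:Z)) ->
  forall N (s : seq int), uniq s -> size s = N ->
  \sum_(x <- centered N) f x <= \sum_(x <- s) f x.
Proof.
move=> h1 h2 N s us ss.
rewrite (perm_big _ (centered_perm N)) big_map.
rewrite -(mapK encK s) big_map.
apply: sum_iota_le.
- move=> i; case: (nat_parity i) => -[a ->].
    by rewrite dec_even dec_odd.
  by rewrite -doubleS dec_odd dec_even.
- by rewrite map_inj_uniq //; exact: enc_inj.
- by rewrite size_map.
Qed.

End Sums.
Definition stepG (C : nat -> seq int) (kf : int * int -> int)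
  (mk : int -> int -> int * int) (J : {fset (int * int)}) : {fset (int * int)} :=
  ([fset x in flatten [seq [seq mk k (kf j) |
       k <- C (#|` [fset j' in J | kf j' == kf j]|)%fset] | j <- J] ])%fset.

Lemma step1E J : step1 J = stepG centered snd (fun p q => (p, q)) J.
Proof. by []. Qed.

Lemma step2E m J : step2 m J = stepG (centered2 m) fst (fun p q => (q, p)) J.
Proof. by []. Qed.

Lemma card_filter_fset (J : {fset (int * int)}) (P : pred (int * int)) :
  #|` [fset j in J | P j]|%fset = size (seq.filter P J).
Proof.
have -> : [fset j in J | P j]%fset = [fset x in seq.filter P J]%fset.
  by apply/fsetP => x; rewrite !inE mem_filter andbC.
by rewrite card_fseq undup_id // filter_uniq // fset_uniq.
Qed.

Section StepG.
Variable R : realType.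
Variables (C : nat -> seq int) (kf pf : int * int -> int) (mk : int -> int -> int * int).
Hypothesis mkK : forall x, mk (pf x) (kf x) = x.
Hypothesis kf_mk : forall p q, kf (mk p q) = q.
Hypothesis pf_mk : forall p q, pf (mk p q) = p.
Hypothesis uC : forall N, uniq (C N).

Lemma partition_kf (F : int * int -> R) (Q : seq int) (X : seq (int * int)) :
  uniq Q -> (forall x, x \in X -> kf x \in Q) ->
  \sum_(x <- X) F x = \sum_(q <- Q) \sum_(x <- X | kf x == q) F x.
Proof.
move=> uQ XQ.
under [RHS]eq_bigr => q _ do rewrite big_mkcond.
rewrite exchange_big /=; apply: eq_big_seq => x xX.
rewrite (bigD1_seq (kf x)) ?XQ //= eqxx big1 ?addr0 // => q qx.
by rewrite eq_sym (negbTE qx).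
Qed.

Let cnt (J : {fset (int * int)}) q := (#|` [fset j' in J | kf j' == q]|)%fset.

Lemma mem_stepG J x : (x \in stepG C kf mk J) =
  (kf x \in map kf J) && (pf x \in C (cnt J (kf x))).
Proof.
rewrite /stepG inE; apply/flattenP/andP.
  case=> s /mapP[j jJ ->] /mapP[k kC ->].
  rewrite kf_mk pf_mk; split => //; exact: map_f.
case=> /mapP[j jJ ejx] px.
exists [seq mk k (kf j) | k <- C (cnt J (kf j))]; first exact: map_f.
by apply/mapP; exists (pf x); rewrite -?ejx // mkK.
Qed.

Lemma stepG_le (F : int * int -> R) :
  (forall q N (s : seq int), uniq s -> size s = N ->
     \sum_(p <- C N) F (mk p q) <= \sum_(p <- s) F (mk p q)) ->
  forall J, \sum_(x <- stepG C kf mk J) F x <= \sum_(x <- J) F x.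
Proof.
move=> best J.
set Q := undup (map kf J).
have uQ : uniq Q by exact: undup_uniq.
rewrite (partition_kf F uQ (X := stepG C kf mk J)); last first.
  by move=> x; rewrite mem_stepG mem_undup => /andP[].
rewrite (partition_kf F uQ (X := J)); last first.
  by move=> x xJ; rewrite mem_undup; exact: map_f.
rewrite big_seq [X in _ <= X]big_seq; apply: ler_sum => q.
rewrite mem_undup => qJ.
set fl := seq.filter (fun x => kf x == q) J.
have -> : \sum_(x <- J | kf x == q) F x = \sum_(p <- map pf fl) F (mk p q).
  rewrite big_map -[LHS]big_filter; apply: eq_big_seq => x.
  by rewrite mem_filter => /andP[/eqP <- _]; rewrite mkK.
have -> : \sum_(x <- stepG C kf mk J | kf x == q) F x =
          \sum_(p <- C (cnt J q)) F (mk p q).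
  rewrite -big_filter -(big_map (mk^~ q) predT F).
  apply: perm_big; apply: uniq_perm.
  - by apply: filter_uniq; exact: fset_uniq.
  - rewrite map_inj_uniq // => a b /(congr1 pf); rewrite !pf_mk.
    done.
  move=> x; rewrite mem_filter mem_stepG; apply/idP/idP.
    case/andP=> /eqP xq /andP[_ px]; apply/mapP; exists (pf x).
      by rewrite -xq.
    by rewrite -xq mkK.
  case/mapP=> p pC ->; rewrite kf_mk pf_mk eqxx qJ /=.
  done.
apply: best.
  rewrite map_inj_in_uniq; first by apply: filter_uniq; exact: fset_uniq.
  move=> a b; rewrite !mem_filter => /andP[/eqP aq _] /andP[/eqP bq _] e.
  by rewrite -(mkK a) -(mkK b) e aq bq.
by rewrite size_map /cnt card_filter_fset.
Qed.

End StepG.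
Section Refl.
Variable R : realType.
Variable eps : R.
Hypothesis eps0 : 0 < eps.

Definition dI (x y : int * int) : int := Num.max `|x.1 - y.1| `|x.2 - y.2|.

Lemma intr_max (a b : int) : ((Num.max a b)%:~R : R) = Num.max a%:~R b%:~R.
Proof.
by rewrite /Num.max /Order.max ltr_int; case: ifP.
Qed.

Lemma normInf_lpt x y :
  normInf (lpt eps x) (lpt eps y) = eps * (dI x y)%:~R.
Proof.
rewrite /normInf /lpt /= -!mulrBr !normrM (gtr0_norm eps0) -maxr_pMr ?ltW //.
by rewrite /dI intr_max !intr_norm !intrB.
Qed.

Lemma inf_cmp (P : set (int * int)) (u v : int * int -> R) :
  (forall j, P j -> exists j', P j' /\ u j' <= v j) -> (forall j, 0 <= u j) ->
  inf [set u j | j in P] <= inf [set v j | j in P].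
Proof.
move=> uv u0; case: (pselect (P !=set0)) => [[j0 Pj0]|nP].
  apply: lb_le_inf; first by exists (v j0), j0.
  move=> _ [j Pj <-]; have [j' [Pj' le]] := uv j Pj.
  apply: le_trans le; apply: ge_inf; last by exists j'.
  by exists 0 => _ [k _ <-].
have -> : P = set0 by apply/seteqP; split => // a Pa; apply: nP; exists a.
by rewrite !image_set0.
Qed.

Lemma inf_zero (P : set (int * int)) (u : int * int -> R) x :
  P x -> u x = 0 -> (forall j, 0 <= u j) -> inf [set u j | j in P] = 0.
Proof.
move=> Px ux u0; apply/le_anti/andP; split.
  rewrite -ux; apply: ge_inf; last by exists x.
  by exists 0 => _ [k _ <-].
by apply: inf_ge0' => _ [k _ <-].
Qed.

Definition phi (S : {fset (int * int)}) k :=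
  if k \in S then - dlat eps S k else dlat eps S k.

Variables (S : {fset (int * int)}) (tau : int * int -> int * int)
  (h : int * int -> bool).
Hypothesis tauK : involutive tau.
Hypothesis iso : forall x y, dI (tau x) (tau y) = dI x y.
Hypothesis same : forall x y, h x -> h y -> (dI x y <= dI (tau x) y)%R.
Hypothesis cross : forall j, ~~ h j -> h (tau j).
Hypothesis fixh : forall j, h j -> h (tau j) -> tau j = j.
Hypothesis cond : forall y, y \in S -> ~~ h y -> tau y \in S.

Lemma dnorm0 j x : 0 <= normInf (lpt eps x) (lpt eps j).
Proof. exact: normInf_ge0. Qed.

Lemma dJ_le x : h x -> distJ eps x S <= distJ eps (tau x) S.
Proof.
move=> hx; apply: inf_cmp; last by move=> j; exact: normInf_ge0.
move=> j /= jS; case: (boolP (h j)) => hj.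
  by exists j; split => //; rewrite !normInf_lpt ler_pM2l // ler_int same.
exists (tau j); split; first exact: cond.
by rewrite !normInf_lpt -{2}(tauK j) iso.
Qed.

Lemma dC_le x : h x -> distCJ eps (tau x) S <= distCJ eps x S.
Proof.
move=> hx; apply: inf_cmp; last by move=> j; exact: normInf_ge0.
move=> j /= jS; case: (boolP (h j)) => hj.
  exists (tau j); split; last by rewrite !normInf_lpt iso.
  apply/negP => tjS; move/negP: jS; apply.
  case: (boolP (h (tau j))) => htj; first by rewrite -(fixh hj htj).
  by rewrite -(tauK j); exact: cond.
exists j; split => //.
have htj := cross hj.
rewrite !normInf_lpt ler_pM2l // ler_int.
rewrite -{1}(tauK j) iso -[X in (_ <= X)%R](iso x j).
exact: same.
Qed.

Lemma phi_refl x : h x -> phi S x <= phi S (tau x).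
Proof.
move=> hx; rewrite /phi /dlat.
have dJ0 y : y \in S -> distJ eps y S = 0.
  by move=> yS; apply: (inf_zero (x := y)) => //; [rewrite /normInf !subrr normr0 maxEle lexx|move=> ?; exact: dnorm0].
have dC0 y : y \notin S -> distCJ eps y S = 0.
  by move=> yS; apply: (inf_zero (x := y)) => //; [rewrite /normInf !subrr normr0 maxEle lexx|move=> ?; exact: dnorm0].
case: (boolP (x \in S)) => xS.
  case: (boolP (tau x \in S)) => txS.
    by rewrite !dJ0 // !add0r lerN2; exact: dC_le.
  apply: (@le_trans _ _ 0); last by apply: addr_ge0; apply: inf_ge0' => _ [k _ <-]; exact: dnorm0.
  by rewrite oppr_le0; apply: addr_ge0; apply: inf_ge0' => _ [k _ <-]; exact: dnorm0.
have txS : tau x \notin S.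
  apply/negP => txS; move/negP: xS; apply.
  case: (boolP (h (tau x))) => htx; first by rewrite -(fixh hx htx).
  by rewrite -(tauK x); exact: cond.
by rewrite (negbTE txS) !dC0 // !addr0; exact: dJ_le.
Qed.

End Refl.
Lemma enc_spec (x : int) :
  (0 < x /\ (enc x)%:Z = 2 * x - 1) \/ (x <= 0 /\ (enc x)%:Z = - (2 * x)).
Proof.
case: x => [[|n]|n] /=; [right|left|right]; split => //; rewrite -?muln2; lia.
Qed.

Lemma mem_qr n m r k : (k \in qr n m r) =
  ((enc k.1 < n)%N && (enc k.2 < m)%N) || ((enc k.1 < r)%N && (k.2 == toprow m)).
Proof.
rewrite /qr /qrR /qrQ !inE -!mem_centered; congr orb.
  apply/allpairsP/andP => [[[p q] /= [pn qm ->]]|[pn qm]] //.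
  by exists (k.1, k.2); case: k pn qm.
apply/mapP/andP => [[p pr ->]|[pr /eqP q]] //=.
by exists k.1; rewrite // -q; case: k {pr q}.
Qed.

Section Conc.
Variable R : realType.
Variable eps : R.
Hypothesis eps0 : 0 < eps.
Variables (n m r : nat).
Hypothesis m0 : (0 < m)%N.
Hypothesis mn : (m <= n)%N.
Hypothesis rn : (r < n)%N.
Local Notation S := (qr n m r).
Local Notation ph := (phi eps S).

Lemma toprowE : exists h : nat, (m = h.*2 /\ toprow m = h%:Z + 1) \/ (m = (h.*2).+1 /\ toprow m = h%:Z + 1).
Proof.
rewrite /toprow; case: (nat_parity m) => -[h ->]; exists h.
  by left; rewrite half_double.
by right; rewrite /= uphalf_double.
Qed.

Lemma dI_tauH c x y : dI (c - x.1, x.2) (c - y.1, y.2) = dI x y.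
Proof. rewrite /dI /=; lia. Qed.
Lemma dI_tauV c x y : dI (x.1, c - x.2) (y.1, c - y.2) = dI x y.
Proof. rewrite /dI /=; lia. Qed.

Lemma reflH1 p q p' : (2 * p <= 1)%R -> p' = 1 - p -> ph (p, q) <= ph (p', q).
Proof.
move=> hp ->.
apply: (@phi_refl R eps eps0 S (fun k => (1 - k.1, k.2)) (fun k => 2 * k.1 <= 1)%R) => //.
- by case=> a b /=; rewrite opprB addrC subrK.
- by move=> x y; exact: dI_tauH.
- by move=> [a b] [c d] /= ha hc; rewrite /dI /=; lia.
- by move=> [a b] /=; lia.
- by move=> [a b] /= ha hb; congr pair; lia.
- move=> [a b]; rewrite !mem_qr /= => H ha.
  have := enc_spec a; have := enc_spec (1 - a); lia.
Qed.

Lemma reflH2 p q p' : (0 <= 2 * p)%R -> p' = - p -> ph (p, q) <= ph (p', q).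
Proof.
move=> hp ->; rewrite -[- p]sub0r.
apply: (@phi_refl R eps eps0 S (fun k => (0 - k.1, k.2)) (fun k => 0 <= 2 * k.1)%R) => //.
- by case=> a b /=; rewrite !sub0r opprK.
- by move=> x y; exact: dI_tauH.
- by move=> [a b] [c d] /= ha hc; rewrite /dI /=; lia.
- by move=> [a b] /=; lia.
- by move=> [a b] /= ha hb; congr pair; lia.
- move=> [a b]; rewrite !mem_qr /= => H ha.
  have := enc_spec a; have := enc_spec (0 - a); lia.
Qed.

Ltac vcond :=
  let a := fresh "a" in let b := fresh "b" in let H := fresh "H" in
  let hb := fresh "hb" in let h := fresh "h" in let hm := fresh "hm" in
  case: (nat_parity m) => -[h hm]; rewrite hm /= ?odd_double //= => _;
  move=> [a b]; rewrite !mem_qr /= => H hb;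
  rewrite /toprow /= ?half_double ?uphalf_double -?muln2 in H *;
  have := enc_spec a; have := enc_spec b; have := enc_spec (1 - b);
  have := enc_spec (0 - b); have := enc_spec (2 - b); lia.

Lemma reflV1 p q q' : odd m -> (2 * q <= 1)%R -> q' = 1 - q -> ph (p, q) <= ph (p, q').
Proof.
move=> mo hq ->.
apply: (@phi_refl R eps eps0 S (fun k => (k.1, 1 - k.2)) (fun k => 2 * k.2 <= 1)%R) => //.
- by case=> a b /=; rewrite opprB addrC subrK.
- by move=> x y; exact: dI_tauV.
- by move=> [a b] [c d] /= ha hc; rewrite /dI /=; lia.
- by move=> [a b] /=; lia.
- by move=> [a b] /= ha hb; congr pair; lia.
- move: mo; vcond.
Qed.

Lemma reflV2 p q q' : odd m -> (0 <= 2 * q)%R -> q' = - q -> ph (p, q) <= ph (p, q').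
Proof.
move=> mo hq ->; rewrite -[- q]sub0r.
apply: (@phi_refl R eps eps0 S (fun k => (k.1, 0 - k.2)) (fun k => 0 <= 2 * k.2)%R) => //.
- by case=> a b /=; rewrite !sub0r opprK.
- by move=> x y; exact: dI_tauV.
- by move=> [a b] [c d] /= ha hc; rewrite /dI /=; lia.
- by move=> [a b] /=; lia.
- by move=> [a b] /= ha hb; congr pair; lia.
- move: mo; vcond.
Qed.

Lemma reflV3 p q q' : ~~ odd m -> (1 <= 2 * q)%R -> q' = 1 - q -> ph (p, q) <= ph (p, q').
Proof.
move=> mo hq ->.
apply: (@phi_refl R eps eps0 S (fun k => (k.1, 1 - k.2)) (fun k => 1 <= 2 * k.2)%R) => //.
- by case=> a b /=; rewrite opprB addrC subrK.
- by move=> x y; exact: dI_tauV.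
- by move=> [a b] [c d] /= ha hc; rewrite /dI /=; lia.
- by move=> [a b] /=; lia.
- by move=> [a b] /= ha hb; congr pair; lia.
- move: mo; vcond.
Qed.

Lemma reflV4 p q q' : ~~ odd m -> (2 * q <= 2)%R -> q' = 2 - q -> ph (p, q) <= ph (p, q').
Proof.
move=> mo hq ->.
apply: (@phi_refl R eps eps0 S (fun k => (k.1, 2 - k.2)) (fun k => 2 * k.2 <= 2)%R) => //.
- by case=> a b /=; rewrite opprB addrC subrK.
- by move=> x y; exact: dI_tauV.
- by move=> [a b] [c d] /= ha hc; rewrite /dI /=; lia.
- by move=> [a b] /=; lia.
- by move=> [a b] /= ha hb; congr pair; lia.
- move: mo; vcond.
Qed.

Lemma row_best q N (s : seq int) : uniq s -> size s = N ->
  \sum_(p <- centered N) ph (p, q) <= \sum_(p <- s) ph (p, q).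
Proof.
apply: (best_centered (f := fun p => ph (p, q))) => a.
- by apply: reflH1; lia.
- by apply: reflH2; lia.
Qed.

Lemma flipK : involutive (fun x : int => 1 - x).
Proof. by move=> x; rewrite opprB addrC subrK. Qed.

Lemma col_best q N (s : seq int) : uniq s -> size s = N ->
  \sum_(p <- centered2 m N) ph (q, p) <= \sum_(p <- s) ph (q, p).
Proof.
move=> us ss; case: (boolP (odd m)) => mo.
  rewrite /centered2 mo.
  apply: (best_centered (f := fun p => ph (q, p))) => // a.
  - by apply: reflV1; lia.
  - by apply: reflV2; lia.
rewrite (perm_big _ (centered2_even N mo)) big_map.
rewrite -(mapK flipK s) [X in _ <= X]big_map.
apply: (best_centered (f := fun p => ph (q, 1 - p))).
- by move=> a; apply: reflV3; lia.
- by move=> a; apply: reflV4; lia.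
- by rewrite map_inj_uniq //; exact: flip_inj.
- by rewrite size_map.
Qed.

Lemma uniq_centered2 N : uniq (centered2 m N).
Proof.
rewrite /centered2; case: ifP => _; first exact: uniq_centered.
by case: ifP => _; exact: uniq_zrange.
Qed.

Lemma main_ineq J : \sum_(k <- rearr m J) ph k <= \sum_(k <- J) ph k.
Proof.
rewrite /rearr step2E.
apply: le_trans (_ : \sum_(k <- step1 J) ph k <= _).
  apply: (@stepG_le R (centered2 m) fst snd (fun p q => (q, p))) => //.
  - by case.
  - exact: uniq_centered2.
  - by move=> q N s us ss; exact: col_best.
rewrite step1E.
apply: (@stepG_le R centered snd fst (fun p q => (p, q))) => //.
- by case.
- exact: uniq_centered.
- by move=> q N s us ss; exact: row_best.
Qed.

End Conc.

Lemma wsum (R : realType) (eps : R) (K S : {fset (int * int)}) :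
  \sum_(k <- Vset (K `|` S)%fset)
      (if (k \in K) != (k \in S) then dlat eps S k else 0) =
  \sum_(k <- K) phi eps S k + \sum_(k <- S) dlat eps S k.
Proof.
have subV (A : {fset (int * int)}) : (A `<=` Vset A)%fset.
  by apply/fsubsetP => x xA; rewrite /Vset !inE xA.
have KV : (K `<=` Vset (K `|` S))%fset.
  exact: fsubset_trans (fsubsetUl K S) (subV _).
have SV : (S `<=` Vset (K `|` S))%fset.
  exact: fsubset_trans (fsubsetUr K S) (subV _).
rewrite [X in _ = X + _](eq_big_seq (fun k => if k \in K then phi eps S k else 0)); last first.
  by move=> k ->.
rewrite [X in _ = _ + X](eq_big_seq (fun k => if k \in S then dlat eps S k else 0)); last first.
  by move=> k ->.
rewrite [X in _ = X + _](big_fset_incl _ KV); last by move=> k _ /negbTE ->.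
rewrite [X in _ = _ + X](big_fset_incl _ SV); last by move=> k _ /negbTE ->.
rewrite -big_split /=; apply: eq_bigr => k _.
rewrite /phi; case: (k \in K); case: (k \in S) => /=.
- by rewrite addNr.
- by rewrite addr0.
- by rewrite add0r.
- by rewrite addr0.
Qed.

Theorem proposition3p6 (R : realType) (eps : R) (n m r : nat)
    (J : {fset (int * int)}) :
  (0 < eps)%R -> (0 < m)%N -> (m <= n)%N -> (r < n)%N ->
  (Deps eps (rearr m J) (qr n m r) <= Deps eps J (qr n m r))%E.
Proof.
move=> e0 m0 mn rn.
rewrite !(Deps_sum e0) lee_fin ler_pM2l ?mulr_gt0 // !wsum lerD2r.
exact: (main_ineq e0 m0 mn rn).
Qed.
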